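(* Let $K$ be a semifield. Let $P$ be a polygon with vertex set $V$ and a non-empty dissection $D$, and let $d=\{\zeta,\eta\}\in D$ be such that $D = \{d\}\cup D_2$ where $D_2$ is a dissection of the subpolygon $P_2$ with vertex set $V_2 = \{\varepsilon \in V : \eta \le \varepsilon \le \zeta\}$. Let $U_1 = \{\varepsilon\in V : \zeta<\varepsilon<\eta\}$, $U_2 = \{\varepsilon\in V : \eta<\varepsilon<\zeta\}$, and let $\alpha \in U_1$, $\beta \in U_2$. Let $f : \operatorname{diag}(P) \to K$ be a map such that $f|_{\operatorname{diag}(P_2)}$ satisfies the $T$-path formula with respect to $D_2$. Then \[ f(\zeta,\eta)^{-1}\big[ f(\alpha,\zeta)f(\eta,\beta) + f(\alpha,\eta)f(\zeta,\beta) \big] = \sum_{\pi\in\mathcal{T}_{P,D}(\alpha,\beta)} f(\pi). \]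
   Context: A semifield is a set $K$ with binary operations $+,\cdot$ such that $+$ is associative and commutative, $(K,\cdot)$ is a commutative group, and $\cdot$ distributes over $+$; $x/y := xy^{-1}$. A polygon is a finite set $V$ of at least three vertices with a cyclic order, pictured as a convex polygon in the plane with vertices anticlockwise. ''$a\le\varepsilon\le b$'' means $\varepsilon$ lies on the cyclic interval from $a$ to $b$ in the positive direction, endpoints included; ''$<$'' excludes the corresponding endpoint. A subpolygon is a subset of at least three vertices with induced cyclic order. A diagonal is a two-element subset of the vertex set (edges included); $\operatorname{diag}(Q)$ is the set of diagonals of $Q$; non-edges are internal. Diagonals cross if they consist of four distinct vertices $\alpha,\beta,\gamma,\delta$ appearing cyclically as $\alpha,\gamma,\beta,\delta$ or $\alpha,\delta,\beta,\gamma$. A dissection is a set of pairwise non-crossing internal diagonals. For a dissection $D$ of a polygon $Q$ and vertices $\pi_1\neq\pi_p$, a $T$-path from $\pi_1$ to $\pi_p$ is a tuple $(\pi_1,\dots,\pi_p)$ of vertices of $Q$ with: (i) $\{\pi_1,\pi_2\},\dots,\{\pi_{p-1},\pi_p\}$ pairwise different diagonals; (ii) no $\{\pi_i,\pi_{i+1}\}$ crosses a diagonal of $D$; (iii) each $\{\pi_{2j},\pi_{2j+1}\}$ lies in $D$, and these cross the segment $\{\pi_1,\pi_p\}$ at pairwise different points progressing monotonically from $\pi_1$ to $\pi_p$. $\mathcal{T}_{Q,D}(\alpha,\beta)$ is the set of these. With $f(\alpha,\beta):=f(\{\alpha,\beta\})$, $f(\pi) := \prod_{i\text{ odd}} f(\pi_i,\pi_{i+1})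 / \prod_{j\text{ even}} f(\pi_j,\pi_{j+1})$. A map $g:\operatorname{diag}(Q)\to K$ satisfies the $T$-path formula with respect to $D$ if $g(\alpha,\beta) = \sum_{\pi\in\mathcal{T}_{Q,D}(\alpha,\beta)} g(\pi)$ for all vertices $\alpha\neq\beta$ of $Q$. *)

(* Defs.v *)
From mathcomp Require Import all_boot.
Set Implicit Arguments. Unset Strict Implicit. Unset Printing Implicit Defensive.

Record semifield := Semifield {
  sf_car :> Type;
  sf_add : sf_car -> sf_car -> sf_car;
  sf_mul : sf_car -> sf_car -> sf_car;
  sf_one : sf_car;
  sf_inv : sf_car -> sf_car;
  sf_addA : forall x y z, sf_add x (sf_add y z) = sf_add (sf_add x y) z;
  sf_addC : forall x y, sf_add x y = sf_add y x;
  sf_mulA : forall x y z, sf_mul x (sf_mul y z) = sf_mul (sf_mul x y) z;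
  sf_mulC : forall x y, sf_mul x y = sf_mul y x;
  sf_mul1 : forall x, sf_mul sf_one x = x;
  sf_mulV : forall x, sf_mul (sf_inv x) x = sf_one;
  sf_mulDl : forall x y z, sf_mul (sf_add x y) z = sf_add (sf_mul x z) (sf_mul y z)
}.

Section Polygon.
(* The polygon P has vertex set 'I_n with the cyclic order 0 -> 1 -> ... -> n-1 -> 0. *)
Variable n : nat.
Implicit Types (a b c d e v x y : 'I_n) (S : {set 'I_n}) (D : {set {set 'I_n}}).

(* cyc_le a e b : "a <= e <= b", e on the cyclic interval from a to b
   (positive direction), endpoints included. *)
Definition cyc_le a e b : bool :=
  if a <= b then (a <= e) && (e <= b) else (a <= e) || (e <= b).

Definition cyc_lt a e b : bool := [&& cyc_le a e b, e != a & e != b].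

Definition crossv a b c d : bool :=
  uniq [:: a; b; c; d] &&
  ((cyc_lt a c b && cyc_lt b d a) || (cyc_lt a d b && cyc_lt b c a)).

Definition is_diag S (dg : {set 'I_n}) : bool := (dg \subset S) && (#|dg| == 2).

Definition crossd (d1 d2 : {set 'I_n}) : bool :=
  [exists a, exists b, exists c, exists c',
     [&& d1 == [set a; b], d2 == [set c; c'] & crossv a b c c']].

(* {a,b} is an edge of the subpolygon with vertex set S
   (induced cyclic order): no vertex of S strictly between a and b on one side. *)
Definition is_edge S a b : bool :=
  [forall v in S, ~~ cyc_lt a v b] || [forall v in S, ~~ cyc_lt b v a].

Definition internal S (dg : {set 'I_n}) : bool :=
  is_diag S dg && [forall a, forall b, (dg == [set a; b]) ==> ~~ is_edge S a b].

Definition dissection S D : bool :=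
  [forall dg in D, internal S dg] && [forall d1 in D, forall d2 in D, ~~ crossd d1 d2].

(* For a diagonal d2 crossing the segment {a,b}, d1 comes strictly before d2 along
   the segment from a to b iff d1 <> d2 and d1 lies in the closed side of d2
   containing a. *)
Definition prec a (d1 d2 : {set 'I_n}) : bool :=
  (d1 != d2) &&
  [exists x, exists y,
     [&& d2 == [set x; y], cyc_lt x a y & [forall v in d1, cyc_le x v y]]].

Definition steps (s : seq 'I_n) : seq {set 'I_n} :=
  [seq [set p.1; p.2] | p <- zip s (behead s)].

(* T-path (pi_1, ..., pi_p) from a to b in the subpolygon S w.r.t. D.
   0-based step index i corresponds to 1-based index i+1, so the steps
   {pi_2j, pi_2j+1} are those with odd 0-based index. *)
Definition is_Tpath S D a b (s : seq 'I_n) : bool :=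
  match s with
  | [::] => false
  | x :: t =>
    let st := steps s in
    let m := size st in
    [&& x == a, last x t == b, a != b, all (fun v => v \in S) s,
        all (fun p => p.1 != p.2) (zip s (behead s)),
        uniq st,
        all (fun dg => [forall e in D, ~~ crossd dg e]) st,
        [forall i : 'I_m, odd i ==>
            (nth set0 st i \in D) && crossd (nth set0 st i) [set a; b]] &
        [forall i : 'I_m, forall j : 'I_m, [&& odd i, odd j & i < j] ==>
            prec a (nth set0 st i) (nth set0 st j)]]
  end.

Fixpoint seqs_upto (N : nat) : seq (seq 'I_n) :=
  match N with
  | 0 => [:: [::]]
  | N'.+1 => [::] :: [seq x :: s | x <- enum 'I_n, s <- seqs_upto N']
  end.

(* The set T_{S,D}(a,b), as a duplicate-free list.  Since the p-1 diagonals of a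
   T-path are pairwise different, p <= n*n + 1, so the bound loses nothing. *)
Definition Tpaths S D a b : seq (seq 'I_n) :=
  [seq s <- seqs_upto (n * n).+1 | is_Tpath S D a b s].

Variable K : semifield.

Definition sf_prod (l : seq K) : K := foldr (@sf_mul K) (sf_one K) l.

(* f(pi) = prod_{i odd} f(pi_i,pi_i+1) / prod_{j even} f(pi_j,pi_j+1) (1-based). *)
Definition fval (f : {set 'I_n} -> K) (s : seq 'I_n) : K :=
  let st := steps s in
  sf_mul (sf_prod [seq f (nth set0 st i) | i <- iota 0 (size st) & ~~ odd i])
         (sf_inv (sf_prod [seq f (nth set0 st i) | i <- iota 0 (size st) & odd i])).

(* Finite sum in a semifield (which may have no zero): None for the empty sum. *)
Definition ssum (l : seq K) : option K :=
  foldr (fun (t : K) (acc : option K) => Some (match acc with None => t | Some u => sf_add t u end))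
        None l.

Definition Tpath_formula S D (f : {set 'I_n} -> K) : Prop :=
  forall a b, a \in S -> b \in S -> a != b ->
    Some (f [set a; b]) = ssum [seq fval f p | p <- Tpaths S D a b].

End Polygon.

(* Main.v *)
Require Import Defs.
From mathcomp Require Import all_boot zify.
From Stdlib Require Import Setoid.
Set Implicit Arguments. Unset Strict Implicit. Unset Printing Implicit Defensive.

Fixpoint evens (T : Type) (l : seq T) : seq T :=
  if l is x :: t then x :: odds t else [::]
with odds (T : Type) (l : seq T) : seq T :=
  if l is _ :: t then evens t else [::].

Lemma nth_eo (T : Type) (x0 : T) (l : seq T) :
  (forall k, nth x0 (evens l) k = nth x0 l k.*2) /\
  (forall k, nth x0 (odds l) k = nth x0 l k.*2.+1).
Proof.
elim: l => [|x l [IHe IHo]]; first by split=> k; rewrite /= !nth_nil.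
split=> k /=; last by rewrite IHe.
by case: k => [|k] //=; rewrite IHo doubleS.
Qed.

Lemma size_eo (T : Type) (l : seq T) :
  size (evens l) = uphalf (size l) /\ size (odds l) = (size l)./2.
Proof. elim: l => [|x l [IHe IHo]] //=; by rewrite IHo IHe uphalfE. Qed.

Lemma mem_eo (T : eqType) (l : seq T) :
  {subset evens l <= l} /\ {subset odds l <= l}.
Proof.
elim: l => [|x l [IHe IHo]] //=; split=> y.
  by rewrite !inE => /orP[->//|/IHo ->]; rewrite orbT.
by move/IHe; rewrite inE => ->; rewrite orbT.
Qed.

Lemma mem_odds (T : eqType) (l : seq T) y : y \in odds l -> y \in l.
Proof. exact: (proj2 (mem_eo l)). Qed.

Lemma forall_odd (T : Type) (x0 : T) (l : seq T) (P : pred T) :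
  [forall i : 'I_(size l), odd i ==> P (nth x0 l i)] = all P (odds l).
Proof.
apply/forallP/(all_nthP x0) => H.
  move=> k; rewrite (proj2 (size_eo l)) (proj2 (nth_eo x0 l)) => Hk.
  have Hk' : k.*2.+1 < size l by move: Hk; rewrite -!muln2; case: (size l) (odd_double_half (size l)) => // m; rewrite -muln2; lia.
  by move: (H (Ordinal Hk')) => /=; rewrite odd_double.
move=> i; apply/implyP => oi.
have E : i = (i./2).*2.+1 :> nat by move: (odd_double_half i); rewrite oi -muln2; lia.
have Hk : i./2 < size (odds l).
  rewrite (proj2 (size_eo l)); move: (ltn_ord i) (odd_double_half (size l)) (odd_double_half i); rewrite oi -!muln2; lia.
by move: (H _ Hk); rewrite (proj2 (nth_eo x0 l)) -E.
Qed.

Lemma forall_odd2 (T : Type) (x0 : T) (l : seq T) (r : rel T) :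
  [forall i : 'I_(size l), forall j : 'I_(size l), [&& odd i, odd j & i < j] ==> r (nth x0 l i) (nth x0 l j)]
  = pairwise r (odds l).
Proof.
apply/forallP/(pairwiseP x0) => H.
  move=> k k'; rewrite !inE (proj2 (size_eo l)) !(proj2 (nth_eo x0 l)) => Hk Hk' kk'.
  have Hk2 : k.*2.+1 < size l by move: Hk (odd_double_half (size l)); rewrite -!muln2; lia.
  have Hk2' : k'.*2.+1 < size l by move: Hk' (odd_double_half (size l)); rewrite -!muln2; lia.
  have h : k.*2.+1 < k'.*2.+1 by move: kk'; rewrite -!muln2; lia.
  move: (H (Ordinal Hk2)) => /forallP /(_ (Ordinal Hk2')) /=; rewrite !odd_double h /=.
  by apply.
move=> i; apply/forallP => j; apply/implyP => /and3P[oi oj ij].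
have Ei : i = (i./2).*2.+1 :> nat by move: (odd_double_half i); rewrite oi -muln2; lia.
have Ej : j = (j./2).*2.+1 :> nat by move: (odd_double_half j); rewrite oj -muln2; lia.
have Hi : i./2 < size (odds l).
  rewrite (proj2 (size_eo l)); move: (ltn_ord i) (odd_double_half (size l)) (odd_double_half i); rewrite oi -!muln2; lia.
have Hj : j./2 < size (odds l).
  rewrite (proj2 (size_eo l)); move: (ltn_ord j) (odd_double_half (size l)) (odd_double_half j); rewrite oj -!muln2; lia.
have ij' : i./2 < j./2 by move: ij Ei Ej; rewrite -!muln2; lia.
by move: (H _ _ Hi Hj ij'); rewrite !(proj2 (nth_eo x0 l)) -Ei -Ej.
Qed.

Lemma filter_iota_eo (T : Type) (U : Type) (x0 : T) (F : T -> U) (l : seq T) (b : bool) :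
  [seq F (nth x0 l i) | i <- iota 0 (size l) & odd i == b] = map F (if b then odds l else evens l).
Proof.
elim: l b => [|x l IH] b; first by case: b.
rewrite /= -add1n iotaDl filter_map.
have -> : [seq i <- iota 0 (size l) | preim (addn 1) (fun i => odd i == b) i]
        = [seq i <- iota 0 (size l) | odd i == ~~ b].
  by apply: eq_filter => i /=; case: b; case: (odd i).
have E : [seq F (nth x0 (x :: l) i) | i <- [seq 1 + i | i <- [seq i <- iota 0 (size l) | odd i == ~~ b]]]
        = [seq F (nth x0 l i) | i <- iota 0 (size l) & odd i == ~~ b] by rewrite -map_comp.
case: b E IH => /= E IH; rewrite E IH //.
Qed.

Section P.
Variable n : nat.
Implicit Types (x y a b : 'I_n) (t s : seq 'I_n).

Lemma steps_cons2 x y t : steps (x :: y :: t) = [set x; y] :: steps (y :: t).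
Proof. by []. Qed.
Lemma steps1 x : steps [:: x] = [::].
Proof. by []. Qed.

Lemma mem_steps x t e : e \in steps (x :: t) ->
  exists a, exists b, [/\ e = [set a; b], a \in x :: t & b \in x :: t].
Proof.
elim: t x => [|y t IH] x //.
rewrite steps_cons2 inE => /orP[/eqP->|/IH [a [b [-> Ha Hb]]]].
  by exists x, y; rewrite !inE !eqxx orbT.
by exists a, b; split => //; rewrite inE ?Ha ?Hb orbT.
Qed.

Lemma vert_odd x t v : v \in t -> v != last x t ->
  exists2 e, e \in odds (steps (x :: t)) & v \in e.
Proof.
move: {2}(size t) (leqnn (size t)) => N; elim: N x t => [|N IH] x t.
  by case: t.
case: t => [|y [|z t']] //= Hs.
  by rewrite inE => /eqP ->; rewrite eqxx.
rewrite !inE => /orP[/eqP->|/orP[/eqP->|Ht]] Hl.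
- by exists [set y; z]; rewrite ?inE ?eqxx.
- by exists [set y; z]; rewrite ?inE ?eqxx ?orbT.
have [e He Hv] := IH z t' (ltnW Hs) Ht Hl.
by exists e => //; rewrite inE He orbT.
Qed.

Definition TP (S : {set 'I_n}) (D : {set {set 'I_n}}) a b x t :=
  let s := x :: t in
  [&& x == a, last x t == b, a != b, all (fun v => v \in S) s,
      all (fun p => p.1 != p.2) (zip s t),
      uniq (steps s),
      all (fun dg => [forall e in D, ~~ crossd dg e]) (steps s),
      all (fun e => (e \in D) && crossd e [set a; b]) (odds (steps s)) &
      pairwise (prec a) (odds (steps s))].

Lemma TpathE S D a b x t : is_Tpath S D a b (x :: t) = TP S D a b x t.
Proof.
rewrite /is_Tpath /TP.
by rewrite (forall_odd set0 (steps (x :: t)) (fun e => (e \in D) && crossd e [set a; b]))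
           (forall_odd2 set0 (steps (x :: t)) (prec a)).
Qed.
End P.

Lemma cyc_leE n (a e b : 'I_n) : cyc_le a e b =
  ((a <= b) && (a <= e) && (e <= b)) || ((b < a) && ((a <= e) || (e <= b))).
Proof. rewrite /cyc_le; case: leqP => _ //=; by rewrite ?andbT ?orbF. Qed.

Lemma cyc_ltE n (a e b : 'I_n) : cyc_lt a e b =
  [&& cyc_le a e b, (e != a :> nat) & (e != b :> nat)].
Proof. by []. Qed.

Lemma ordE n (a b : 'I_n) : (a == b) = (a == b :> nat).
Proof. by []. Qed.

Ltac geo := rewrite ?cyc_ltE ?cyc_leE ?ordE; lia.

Lemma cyc_lt_swap n (a b d : 'I_n) : a != b -> d != a -> d != b ->
  cyc_lt b d a = ~~ cyc_lt a d b.
Proof. geo. Qed.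

Lemma crossvS n (a b c d : 'I_n) : crossv a b c d =
  [&& a != b, a != c, a != d, b != c, b != d, c != d & cyc_lt a c b != cyc_lt a d b].
Proof.
rewrite /crossv /= !inE !negb_or !andbT.
case: (eqVneq a b) => //= ab; case: (eqVneq a c) => //= ac; case: (eqVneq a d) => //= ad.
case: (eqVneq b c) => //= bc; case: (eqVneq b d) => //= bd; case: (eqVneq c d) => //= cd.
rewrite (cyc_lt_swap ab) ?(cyc_lt_swap ab) // 1?eq_sym //.
by case: (cyc_lt a c b); case: (cyc_lt a d b).
Qed.

Definition clt (x e y : nat) : Prop := (x < e /\ e < y) \/ (y < x /\ x < e) \/ (e < y /\ y < x).
Definition rd n (h x : 'I_n) : nat := if h <= x then x - h else x + n - h.

Lemma cyc_ltD n (h x e y : 'I_n) : cyc_lt x e y <-> clt (rd h x) (rd h e) (rd h y).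
Proof.
rewrite /clt /rd cyc_ltE cyc_leE.
move: (ltn_ord h) (ltn_ord x) (ltn_ord e) (ltn_ord y).
case: (leqP h x); case: (leqP h e); case: (leqP h y); move=> *; split; lia.
Qed.

Lemma cyc_leD n (h x e y : 'I_n) : cyc_le x e y <->
  rd h e = rd h x \/ rd h e = rd h y \/ clt (rd h x) (rd h e) (rd h y).
Proof.
rewrite /clt /rd cyc_leE.
move: (ltn_ord h) (ltn_ord x) (ltn_ord e) (ltn_ord y).
case: (leqP h x); case: (leqP h e); case: (leqP h y); move=> *; split; lia.
Qed.

Lemma eqD n (h x y : 'I_n) : x = y <-> rd h x = rd h y.
Proof.
split; first by move->.
rewrite /rd; move: (ltn_ord h) (ltn_ord x) (ltn_ord y).
case: (leqP h x); case: (leqP h y); move=> ? ? ? ? ? E; apply: val_inj => /=; lia.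
Qed.

Lemma rd_lt n (h x : 'I_n) : rd h x < n.
Proof. rewrite /rd; move: (ltn_ord h) (ltn_ord x); case: (leqP h x); lia. Qed.
Lemma rd0 n (h : 'I_n) : rd h h = 0.
Proof. by rewrite /rd leqnn subnn. Qed.

Definition xcr (a b c d : nat) : Prop :=
  a <> b /\ a <> c /\ a <> d /\ b <> c /\ b <> d /\ c <> d /\ (clt a c b <-> ~ clt a d b).

Lemma neqD n (h x y : 'I_n) : x != y <-> rd h x <> rd h y.
Proof. rewrite -(eqD h); split; [by move/eqP | by move/eqP]. Qed.

Lemma eqbD n (h x y : 'I_n) : x == y <-> rd h x = rd h y.
Proof. rewrite -(eqD h); split; by move/eqP. Qed.

Lemma xorD n (h a b c d : 'I_n) :
  (cyc_lt a c b != cyc_lt a d b) <-> (clt (rd h a) (rd h c) (rd h b) <-> ~ clt (rd h a) (rd h d) (rd h b)).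
Proof.
rewrite -!(cyc_ltD h).
case: (cyc_lt a c b); case: (cyc_lt a d b); split => //=; intuition.
Qed.

Lemma crossvD n (h a b c d : 'I_n) : crossv a b c d <->
  xcr (rd h a) (rd h b) (rd h c) (rd h d).
Proof.
rewrite crossvS /xcr -!(neqD h) -(xorD h).
split.
  by case/and5P=> -> -> -> -> /andP[-> /andP[-> ->]].
by case=> -> [-> [-> [-> [-> [-> ->]]]]].
Qed.

Ltac dprep h :=
  do 3 rewrite ?(cyc_ltD h) ?(cyc_leD h) ?(crossvD h) -?(rwP negP) -?(rwP andP) -?(rwP orP) ?(neqD h) ?(eqbD h) ?(eqD h) ?rd0;
  rewrite /xcr /clt;
  repeat match goal with |- context [rd ?h' ?x] => let r := fresh "r" in generalize (rd h' x) as r end; intros.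

Ltac dgeo h :=
  rewrite ?(cyc_ltD h) ?(cyc_leD h) ?(crossvD h) -?(rwP negP) -?(rwP andP) -?(rwP orP) ?(neqD h) ?(eqbD h) ?(eqD h) ?rd0 /xcr /clt;
  repeat match goal with |- context [rd ?h' ?x] => let r := fresh "r" in generalize (rd h' x) as r end; intros;
  lia.

Section Geo.
Variable n : nat.
Variables zeta eta alpha beta : 'I_n.
Definition Conf := [/\ zeta != eta, cyc_lt zeta alpha eta & cyc_lt eta beta zeta].

Lemma L_S2 u : cyc_le eta u zeta <-> rd eta u <= rd eta zeta.
Proof. rewrite (cyc_leD eta) rd0 /clt; lia. Qed.

Lemma L_conf : Conf -> [/\ 0 < rd eta zeta, rd eta zeta < rd eta alpha, 0 < rd eta beta & rd eta beta < rd eta zeta].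
Proof. case; move: (rd_lt eta alpha) (rd_lt eta zeta); dprep eta; split; lia. Qed.

Ltac prep C := case: (L_conf C); rewrite ?L_S2; dprep eta.

Lemma L_ua u v : Conf -> cyc_le eta u zeta -> cyc_le eta v zeta ->
  cyc_lt u alpha v <-> rd eta v < rd eta u.
Proof. move/L_conf=> [? ? ? ?]; rewrite !L_S2 (cyc_ltD eta) /clt; lia. Qed.

Lemma L_cab s t : Conf -> cyc_le eta s zeta -> cyc_le eta t zeta ->
  crossv s t alpha beta <-> (rd eta s < rd eta beta /\ rd eta beta < rd eta t) \/ (rd eta t < rd eta beta /\ rd eta beta < rd eta s).
Proof. move/L_conf=> [? ? ? ?]; rewrite !L_S2 (crossvD eta) /xcr /clt; lia. Qed.

Lemma G_alpha_notS2 : Conf -> ~~ cyc_le eta alpha zeta.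
Proof. move=> C; apply/negP; prep C; lia. Qed.
Lemma G_beta_S2 : Conf -> cyc_le eta beta zeta. Proof. move=> C; prep C; lia. Qed.
Lemma G_zeta_S2 : cyc_le eta zeta zeta. Proof. rewrite L_S2; lia. Qed.
Lemma G_eta_S2 : cyc_le eta eta zeta. Proof. rewrite L_S2 rd0; lia. Qed.
Lemma G_ab : Conf -> alpha != beta. Proof. move=> C; prep C; lia. Qed.
Lemma G_bz : Conf -> beta != zeta. Proof. move=> C; prep C; lia. Qed.
Lemma G_be : Conf -> beta != eta. Proof. move=> C; prep C; lia. Qed.
Lemma G_az : Conf -> alpha != zeta. Proof. move=> C; prep C; lia. Qed.
Lemma G_ae : Conf -> alpha != eta. Proof. move=> C; prep C; lia. Qed.

Lemma G_P1S2 u : Conf -> cyc_le eta u zeta -> cyc_le zeta u eta -> (u == zeta) || (u == eta).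
Proof. move=> C; prep C; lia. Qed.

Lemma G_alpha_step v : Conf -> ~~ crossv alpha v zeta eta -> cyc_le zeta v eta.
Proof. move=> C; rewrite -(rwP negP); prep C; lia. Qed.

Lemma G_S2_d u v : Conf -> cyc_le eta u zeta -> cyc_le eta v zeta -> ~~ crossv u v zeta eta.
Proof. move=> C Hu Hv; apply/negP; move: Hu Hv; prep C; lia. Qed.

Lemma G_alphax x u v : Conf -> (x == zeta) || (x == eta) ->
  cyc_le eta u zeta -> cyc_le eta v zeta -> ~~ crossv alpha x u v.
Proof. move=> C Hx Hu Hv; apply/negP; move: Hx Hu Hv; prep C; lia. Qed.

Lemma G_d_cross : Conf -> crossv zeta eta alpha beta.
Proof. move=> C; prep C; lia. Qed.

Lemma G_side xp u v : Conf -> (xp == zeta) || (xp == eta) ->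
  cyc_le eta u zeta -> cyc_le eta v zeta -> u != xp -> v != xp ->
  cyc_lt u alpha v = cyc_lt u xp v.
Proof. move=> C H1 H2 H3 H4 H5; apply/idP/idP; move: H1 H2 H3 H4 H5; prep C; lia. Qed.

Lemma G_cross_fwd xp u v : Conf -> (xp == zeta) || (xp == eta) ->
  cyc_le eta u zeta -> cyc_le eta v zeta -> crossv u v xp beta -> crossv u v alpha beta.
Proof. move=> C H1 H2 H3; rewrite (L_cab C H2 H3); move: H1 H2 H3; prep C; lia. Qed.

Lemma G_cross_back xp u v : Conf -> (xp == zeta) || (xp == eta) ->
  cyc_le eta u zeta -> cyc_le eta v zeta -> u != xp -> v != xp ->
  crossv u v alpha beta -> crossv u v xp beta.
Proof. move=> C H1 H2 H3 H4 H5; rewrite (L_cab C H2 H3); move: H1 H2 H3 H4 H5; prep C; lia. Qed.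

Lemma G_prec_d x xp u v : Conf -> ((x == zeta) && (xp == eta)) || ((x == eta) && (xp == zeta)) ->
  cyc_le eta u zeta -> cyc_le eta v zeta ->
  cyc_lt u xp v -> cyc_le u x v.
Proof. move=> C; prep C; lia. Qed.

Lemma G_fan xp s t u v : Conf -> (xp == zeta) || (xp == eta) ->
  cyc_le eta s zeta -> cyc_le eta t zeta -> cyc_le eta u zeta -> cyc_le eta v zeta ->
  crossv s t alpha beta -> crossv u v alpha beta -> s != xp -> t != xp ->
  cyc_lt u alpha v -> cyc_le u s v -> cyc_le u t v -> (u != xp) && (v != xp).
Proof.
move=> C Hx Hs Ht Hu Hv.
rewrite (L_cab C Hs Ht) (L_cab C Hu Hv) (L_ua C Hu Hv).
move: Hx Hs Ht Hu Hv; prep C. lia.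
Qed.
End Geo.

Section S.
Variable n : nat.
Implicit Types (x y a b c d u v s t : 'I_n).

Lemma set2_eq a b c d : [set a; b] = [set c; d] -> (a = c /\ b = d) \/ (a = d /\ b = c).
Proof.
move=> E.
have ha : a \in [set c; d] by rewrite -E !inE eqxx.
have hb : b \in [set c; d] by rewrite -E !inE eqxx orbT.
have hc : c \in [set a; b] by rewrite E !inE eqxx.
have hd : d \in [set a; b] by rewrite E !inE eqxx orbT.
move: ha hb hc hd; rewrite !inE !ordE => ha hb hc hd.
have : ((a == c :> nat) && (b == d :> nat)) || ((a == d :> nat) && (b == c :> nat)) by lia.
by case/orP=> /andP[/eqP h1 /eqP h2]; [left|right]; split; apply: val_inj.
Qed.

Lemma crossv_sym1_imp a b c d : crossv a b c d -> crossv b a c d.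
Proof. dprep a; lia. Qed.
Lemma crossv_sym2_imp a b c d : crossv a b c d -> crossv a b d c.
Proof. dprep a; lia. Qed.
Lemma crossv_symP_imp a b c d : crossv a b c d -> crossv c d a b.
Proof. dprep a; lia. Qed.
Lemma crossv_sym1 a b c d : crossv a b c d = crossv b a c d.
Proof. by apply/idP/idP; apply: crossv_sym1_imp. Qed.
Lemma crossv_sym2 a b c d : crossv a b c d = crossv a b d c.
Proof. by apply/idP/idP; apply: crossv_sym2_imp. Qed.
Lemma crossv_symP a b c d : crossv a b c d = crossv c d a b.
Proof. by apply/idP/idP; apply: crossv_symP_imp. Qed.

Lemma crossdE a b c d : crossd [set a; b] [set c; d] = crossv a b c d.
Proof.
apply/existsP/idP.
  case=> a' /existsP [b' /existsP [c' /existsP [d' /and3P [/eqP E1 /eqP E2 H]]]].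
  case: (set2_eq E1) => [[-> ->]|[-> ->]]; case: (set2_eq E2) => [[-> ->]|[-> ->]];
  first [exact H | rewrite crossv_sym1; exact H | rewrite crossv_sym2; exact H | rewrite crossv_sym1 crossv_sym2; exact H].
move=> H; exists a; apply/existsP; exists b; apply/existsP; exists c; apply/existsP; exists d.
by rewrite !eqxx H.
Qed.

Lemma crossd_sym (e1 e2 : {set 'I_n}) : crossd e1 e2 = crossd e2 e1.
Proof.
apply/existsP/existsP.
  case=> a /existsP [b /existsP [c /existsP [d /and3P [E1 E2 H]]]].
  exists c; apply/existsP; exists d; apply/existsP; exists a; apply/existsP; exists b.
  by rewrite E1 E2 -crossv_symP.
case=> a /existsP [b /existsP [c /existsP [d /and3P [E1 E2 H]]]].
exists c; apply/existsP; exists d; apply/existsP; exists a; apply/existsP; exists b.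
by rewrite E1 E2 -crossv_symP.
Qed.

Lemma crossd_disj (e1 e2 : {set 'I_n}) v : crossd e1 e2 -> v \in e1 -> v \notin e2.
Proof.
case/existsP=> a /existsP [b /existsP [c /existsP [d /and3P [/eqP -> /eqP -> H]]]].
move: H; rewrite crossvS => /and4P[_ ac ad /and4P[bc bd _ _]].
rewrite !inE => /orP[] /eqP ->; rewrite negb_or ?ac ?ad ?bc ?bd //.
Qed.

Lemma forall_set2 (P : pred 'I_n) s t : [forall w in [set s; t], P w] = P s && P t.
Proof.
apply/forallP/andP.
  move=> H; split; [move: (H s) | move: (H t)]; by rewrite !inE eqxx ?orbT.
by case=> Hs Ht w; rewrite !inE; apply/implyP => /orP[] /eqP ->.
Qed.

Lemma precE a e1 u v : prec a e1 [set u; v] =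
  (e1 != [set u; v]) &&
  ((cyc_lt u a v && [forall w in e1, cyc_le u w v]) || (cyc_lt v a u && [forall w in e1, cyc_le v w u])).
Proof.
rewrite /prec; congr (_ && _).
apply/existsP/orP.
  case=> x /existsP [y /and3P [/eqP E H1 H2]].
  by case: (set2_eq E) => [[-> ->]|[-> ->]]; [left|right]; rewrite H1 H2.
case=> /andP[H1 H2].
  by exists u; apply/existsP; exists v; rewrite eqxx H1 H2.
by exists v; apply/existsP; exists u; rewrite setUC eqxx H1 H2.
Qed.

End S.

Section Seqs.
Variable n : nat.

Lemma mem_seqs_upto N (s : seq 'I_n) : (s \in seqs_upto n N) = (size s <= N).
Proof.
elim: N s => [|N IH] [|x s] //=.
rewrite inE /= ltnS; apply/allpairsP/idP.
  by case=> [[a b] [_ Hb /= E]]; case: E => _ ->; rewrite -IH.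
by move=> H; exists (x, s); split => //; [rewrite mem_enum | rewrite IH].
Qed.

Lemma uniq_seqs_upto N : uniq (seqs_upto n N).
Proof.
elim: N => [//|N IH] /=; apply/andP; split.
  by apply/negP => /allpairsP [[a b] [_ _ E]].
apply: allpairs_uniq => //; first exact: enum_uniq.
by move=> [a b] [c e] _ _ /= [-> ->].
Qed.

Lemma size_Tpath S D a b (s : seq 'I_n) : is_Tpath S D a b s -> size s <= (n * n).+1.
Proof.
case: s => [//|x t]; rewrite TpathE /TP => /andP[_ /andP[_ /andP[_ /andP[_ /andP[/allP Hz /andP[Hu _]]]]]].
have Hs : size (steps (x :: t)) = size t by rewrite /steps size_map size2_zip //= leqnSn.
have Hsub : {subset steps (x :: t) <= enum [set A : {set 'I_n} | #|A| == 2]}.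
  move=> e /mapP [[p1 p2] Hp ->]; rewrite mem_enum inE cards2.
  by move: (Hz _ Hp) => /= ->.
have := uniq_leq_size Hu Hsub; rewrite -cardE card_draws card_ord bin2 Hs /= => H.
have H2 : (n * n.-1)./2 <= n * n.
  rewrite leq_half_double; apply: leq_trans (leq_mul (leqnn n) (leq_pred n)) _.
  by set m := n * n; lia.
by rewrite ltnS; apply: leq_trans H H2.
Qed.
End Seqs.

Section SF.
Variable K : semifield.
Local Notation "x * y" := (sf_mul x y).
Local Notation "x + y" := (sf_add x y).

Lemma sfmulVr (x : K) : x * sf_inv x = sf_one K.
Proof. by rewrite sf_mulC sf_mulV. Qed.
Lemma sfmul1r (x : K) : x * sf_one K = x.
Proof. by rewrite sf_mulC sf_mul1. Qed.
Lemma sfinv_uniq (y z : K) : y * z = sf_one K -> y = sf_inv z.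
Proof. by move=> H; rewrite -[sf_inv z]sf_mul1 -H -sf_mulA sfmulVr sfmul1r. Qed.
Lemma sfinvM (y z : K) : sf_inv (y * z) = sf_inv y * sf_inv z.
Proof.
symmetry; apply: sfinv_uniq.
by rewrite sf_mulA [sf_inv y * _]sf_mulC -[sf_inv z * sf_inv y * y]sf_mulA sf_mulV sfmul1r sf_mulV.
Qed.
Lemma sfmulDr (x y z : K) : x * (y + z) = x * y + x * z.
Proof. by rewrite sf_mulC sf_mulDl ![z * x]sf_mulC ![y * x]sf_mulC. Qed.

Definition oadd (u v : option K) : option K :=
  match u, v with
  | None, _ => v
  | _, None => u
  | Some a, Some b => Some (a + b)
  end.

Lemma oaddA u v w : oadd u (oadd v w) = oadd (oadd u v) w.
Proof. by case: u; case: v; case: w => //= *; rewrite sf_addA. Qed.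
Lemma oaddC u v : oadd u v = oadd v u.
Proof. by case: u; case: v => //= *; rewrite sf_addC. Qed.

Lemma ssum_cons (x : K) l : ssum (x :: l) = oadd (Some x) (ssum l).
Proof. by rewrite /=; case: (ssum l). Qed.

Lemma ssum_cat (l1 l2 : seq K) : ssum (l1 ++ l2) = oadd (ssum l1) (ssum l2).
Proof.
elim: l1 => [|x l1 IH]; first by [].
by rewrite cat_cons ssum_cons IH oaddA -ssum_cons.
Qed.

Lemma ssum_perm (T : eqType) (F : T -> K) (l1 l2 : seq T) : perm_eq l1 l2 -> ssum (map F l1) = ssum (map F l2).
Proof.
elim: l1 l2 => [|x l1 IH] l2; first by rewrite perm_sym => /perm_nilP ->.
move=> H; have Hx : x \in l2 by rewrite -(perm_mem H) mem_head.
case/splitPr: Hx H => s1 s2 H.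
have H' : perm_eq l1 (s1 ++ s2).
  rewrite -(perm_cons x); apply: (perm_trans H).
  by move: (perm_catCA s1 [:: x] s2 (x :: s1 ++ s2)) => /= ->.
rewrite map_cons ssum_cons (IH _ H') !map_cat !ssum_cat map_cons ssum_cons.
by rewrite oaddA [oadd (Some (F x)) _]oaddC -oaddA.
Qed.

Lemma ssum_map_mul (c : K) (l : seq K) :
  ssum [seq c * y | y <- l] = (if ssum l is Some s then Some (c * s) else None).
Proof.
elim: l => [//|x l IH]; rewrite map_cons !ssum_cons IH.
by case: (ssum l) => //= s; rewrite sfmulDr.
Qed.
End SF.

Section FV.
Variable n : nat.
Variable K : semifield.

Lemma fvalE (f : {set 'I_n} -> K) (s : seq 'I_n) :
  fval f s = sf_mul (sf_prod (map f (evens (steps s)))) (sf_inv (sf_prod (map f (odds (steps s))))).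
Proof.
rewrite /fval.
have E1 : [seq f (nth set0 (steps s) i) | i <- iota 0 (size (steps s)) & ~~ odd i]
        = [seq f (nth set0 (steps s) i) | i <- iota 0 (size (steps s)) & odd i == false].
  by congr map; apply: eq_filter => i; case: (odd i).
have E2 : [seq f (nth set0 (steps s) i) | i <- iota 0 (size (steps s)) & odd i]
        = [seq f (nth set0 (steps s) i) | i <- iota 0 (size (steps s)) & odd i == true].
  by congr map; apply: eq_filter => i; case: (odd i).
by rewrite E1 E2 !filter_iota_eo.
Qed.

Lemma sfmulACA (a b c d : K) : sf_mul (sf_mul a b) (sf_mul c d) = sf_mul (sf_mul a c) (sf_mul b d).
Proof.
by rewrite -!sf_mulA; congr (sf_mul a); rewrite !sf_mulA; congr (sf_mul _ d); rewrite sf_mulC.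
Qed.
End FV.

Section Main.
Variable n : nat.
Variables (D D2 : {set {set 'I_n}}) (zeta eta alpha beta : 'I_n).
Hypothesis HD : dissection [set: 'I_n] D.
Hypothesis Hd : [set zeta; eta] \in D.
Hypothesis HDe : D = [set zeta; eta] |: D2.
Hypothesis HD2 : dissection [set e | cyc_le eta e zeta] D2.
Hypothesis Ha : cyc_lt zeta alpha eta.
Hypothesis Hb : cyc_lt eta beta zeta.

Local Notation S2 := [set e | cyc_le eta e zeta].
Local Notation d := [set zeta; eta].

Lemma Hze : zeta != eta.
Proof.
move: HD => /andP[/forallP /(_ d)]; rewrite Hd /= => /andP[/andP[_ H] _] _.
by apply/eqP => E; move: H; rewrite E setUid cards1.
Qed.

Lemma C : Conf zeta eta alpha beta.
Proof. by split; [exact: Hze | |]. Qed.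

Definition inS2 (e : {set 'I_n}) :=
  exists u, exists v, [/\ e = [set u; v], cyc_le eta u zeta & cyc_le eta v zeta].

Lemma F_D2 e : e \in D2 -> inS2 e.
Proof.
move: HD2 => /andP[/forallP /(_ e) H _] He; move: H; rewrite He /= => /andP[/andP[Hs /cards2P [u [v [uv E]]]] _].
exists u, v; split => //; [move: (subsetP Hs u) | move: (subsetP Hs v)];
  by rewrite E !inE eqxx ?orbT => /(_ isT).
Qed.

Lemma F_D e : e \in D -> (e = d) \/ (e \in D2).
Proof. by rewrite HDe => /setU1P. Qed.

Lemma F_Dsub e : e \in D -> inS2 e.
Proof.
case/F_D => [->|]; last exact: F_D2.
exists zeta, eta; split; [by [] | exact: G_zeta_S2 | exact: G_eta_S2].
Qed.

Lemma F_D2D e : e \in D2 -> e \in D.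
Proof. by rewrite HDe => H; apply/setU1P; right. Qed.

Lemma F_nocross e1 e2 : e1 \in D -> e2 \in D -> ~~ crossd e1 e2.
Proof. by move: HD => /andP[_ /forallP H] h1 h2; move: (H e1); rewrite h1 /= => /forallP /(_ e2); rewrite h2. Qed.

Definition pairOK (x xp : 'I_n) := ((x == zeta) && (xp == eta)) || ((x == eta) && (xp == zeta)).

Lemma pairOK_d x xp : pairOK x xp -> [set x; xp] = d.
Proof. by case/orP=> /andP[/eqP-> /eqP->]; rewrite // setUC. Qed.
Lemma pairOK_xp x xp : pairOK x xp -> (xp == zeta) || (xp == eta).
Proof. by case/orP=> /andP[_ ->]; rewrite ?orbT. Qed.
Lemma pairOK_x x xp : pairOK x xp -> (x == zeta) || (x == eta).
Proof. by case/orP=> /andP[-> _]; rewrite ?orbT. Qed.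
Lemma pairOK_neq x xp : pairOK x xp -> x != xp.
Proof. by case/orP=> /andP[/eqP-> /eqP->]; rewrite ?Hze // eq_sym Hze. Qed.
Lemma ZE_S2 x : (x == zeta) || (x == eta) -> cyc_le eta x zeta.
Proof. by case/orP=> /eqP->; [exact: G_zeta_S2 | exact: G_eta_S2]. Qed.
Lemma ZE_alpha x : (x == zeta) || (x == eta) -> alpha != x.
Proof. by case/orP=> /eqP->; [exact: G_az C | exact: G_ae C]. Qed.
Lemma ZE_beta x : (x == zeta) || (x == eta) -> beta != x.
Proof. by case/orP=> /eqP->; [exact: G_bz C | exact: G_be C]. Qed.

Lemma alpha_notin (e : {set 'I_n}) : inS2 e -> alpha \notin e.
Proof.
case=> u [v [-> Hu Hv]]; rewrite !inE; apply/negP => /orP[] /eqP E;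
  by move: (G_alpha_notS2 C); rewrite ?E ?Hu ?Hv.
Qed.

Lemma T_cross_fwd xp e : (xp == zeta) || (xp == eta) -> inS2 e ->
  crossd e [set xp; beta] -> crossd e [set alpha; beta].
Proof. move=> Hx [u [v [-> Hu Hv]]]; rewrite !crossdE; exact: G_cross_fwd C Hx Hu Hv. Qed.

Lemma T_cross_back xp e : (xp == zeta) || (xp == eta) -> inS2 e -> xp \notin e ->
  crossd e [set alpha; beta] -> crossd e [set xp; beta].
Proof.
move=> Hx [u [v [-> Hu Hv]]]; rewrite !inE negb_or !crossdE => /andP[h1 h2].
apply: G_cross_back C Hx Hu Hv _ _; by rewrite eq_sym.
Qed.

Lemma T_prec xp e1 e2 : (xp == zeta) || (xp == eta) -> inS2 e2 -> xp \notin e2 ->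
  prec alpha e1 e2 = prec xp e1 e2.
Proof.
move=> Hx [u [v [-> Hu Hv]]]; rewrite !inE negb_or => /andP[h1 h2].
rewrite !precE (G_side C Hx Hu Hv) 1?eq_sym // (G_side C Hx Hv Hu) // eq_sym //.
Qed.

Lemma xp_notin_cross xp e : crossd e [set xp; beta] -> xp \notin e.
Proof. by rewrite crossd_sym => /crossd_disj; apply; rewrite !inE eqxx. Qed.

Lemma T_fan xp e3 e : (xp == zeta) || (xp == eta) -> inS2 e3 -> inS2 e ->
  crossd e3 [set alpha; beta] -> crossd e [set alpha; beta] -> xp \notin e3 ->
  prec alpha e3 e -> xp \notin e.
Proof.
move=> Hx [s [t [-> Hs Ht]]] [u [v [-> Hu Hv]]]; rewrite !crossdE !inE !negb_or => c1 c2 /andP[h1 h2]; rewrite eq_sym in h1; rewrite eq_sym in h2.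
rewrite precE (forall_set2 (fun w => cyc_le u w v)) (forall_set2 (fun w => cyc_le v w u)) => /andP[_ /orP[/andP[H1 /andP[H2 H3]]|/andP[H1 /andP[H2 H3]]]].
  by move: (G_fan C Hx Hs Ht Hu Hv c1 c2 h1 h2 H1 H2 H3); rewrite ![xp == _]eq_sym.
rewrite crossv_sym1 in c2.
by move: (G_fan C Hx Hs Ht Hv Hu c1 c2 h1 h2 H1 H2 H3); rewrite ![xp == _]eq_sym andbC.
Qed.


Lemma TPI (S' : {set 'I_n}) (D' : {set {set 'I_n}}) (a b x : 'I_n) (t : seq 'I_n) :
  x = a -> last x t = b -> a != b -> all (fun v => v \in S') (x :: t) ->
  all (fun p => p.1 != p.2) (zip (x :: t) t) -> uniq (steps (x :: t)) ->
  all (fun dg => [forall e in D', ~~ crossd dg e]) (steps (x :: t)) ->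
  all (fun e => (e \in D') && crossd e [set a; b]) (odds (steps (x :: t))) ->
  pairwise (prec a) (odds (steps (x :: t))) -> is_Tpath S' D' a b (x :: t).
Proof. move=> E1 E2 H3 H4 H5 H6 H7 H8 H9; subst x; by rewrite TpathE /TP eqxx E2 eqxx H3 H4 H5 H6 H7 H8 H9. Qed.

Lemma TPE (S' : {set 'I_n}) (D' : {set {set 'I_n}}) (a b x : 'I_n) (t : seq 'I_n) : is_Tpath S' D' a b (x :: t) ->
  x = a /\ last x t = b /\ a != b /\ all (fun v => v \in S') (x :: t) /\
   all (fun p => p.1 != p.2) (zip (x :: t) t) /\ uniq (steps (x :: t)) /\
   all (fun dg => [forall e in D', ~~ crossd dg e]) (steps (x :: t)) /\
   all (fun e => (e \in D') && crossd e [set a; b]) (odds (steps (x :: t))) /\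
   pairwise (prec a) (odds (steps (x :: t))).
Proof.
rewrite TpathE /TP => /andP[/eqP-> /andP[/eqP-> /andP[H3 /andP[H4 /andP[H5 /andP[H6 /andP[H7 /andP[H8 H9]]]]]]]].
by do !split.
Qed.

Lemma steps_S2 x t e : all (fun v => v \in S2) (x :: t) -> e \in steps (x :: t) -> inS2 e.
Proof.
move=> /allP H /mem_steps [a [b [-> Ha' Hb']]].
by exists a, b; split => //; [move: (H a Ha') | move: (H b Hb')]; rewrite inE.
Qed.

Lemma nocross_alpha x e : (x == zeta) || (x == eta) -> e \in D -> ~~ crossd [set alpha; x] e.
Proof. move=> Hx /F_Dsub [u [v [-> Hu Hv]]]; rewrite crossdE; exact: G_alphax C Hx Hu Hv. Qed.

Lemma nocross_S2_d e : inS2 e -> ~~ crossd e d.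
Proof. case=> u [v [-> Hu Hv]]; rewrite crossdE; exact: G_S2_d C Hu Hv. Qed.

Lemma nocross_d_d : ~~ crossd d d.
Proof. by rewrite crossdE crossvS eqxx /= andbF. Qed.

Definition Psi (x : 'I_n) (q : seq 'I_n) : seq 'I_n :=
  match q with _ :: q1 :: qt => if q1 == x then alpha :: x :: qt else alpha :: x :: q
  | _ => alpha :: x :: q end.

Lemma odds_cons2 (T : Type) (a b : T) l : odds (a :: b :: l) = b :: odds l.
Proof. by []. Qed.

Lemma all_cons (T : Type) (P : pred T) a l : all P (a :: l) = P a && all P l.
Proof. by []. Qed.

Lemma lt_le (a e b : 'I_n) : cyc_lt a e b -> cyc_le a e b.
Proof. by rewrite cyc_ltE => /andP[]. Qed.

Lemma T_prec_d x xp e : pairOK x xp -> inS2 e -> crossd e [set xp; beta] -> prec alpha [set x; xp] e.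
Proof.
move=> Hp [u [v [-> Hu Hv]]] Hc.
have Hxp := pairOK_xp Hp.
have Hn : xp \notin [set u; v] by apply: xp_notin_cross Hc.
move: Hn; rewrite !inE negb_or => /andP[n1 n2].
move: Hc; rewrite crossdE crossvS => /and4P[uv _ _ _].
rewrite precE (forall_set2 (fun w => cyc_le u w v)) (forall_set2 (fun w => cyc_le v w u)).
apply/andP; split.
  apply/negP => /eqP E; have : xp \in [set u; v] by rewrite -E !inE eqxx orbT.
  by rewrite !inE (negbTE n1) (negbTE n2).
case H : (cyc_lt u xp v).
  apply/orP; left; rewrite (G_side C Hxp Hu Hv) 1?eq_sym // H /=.
  by rewrite (G_prec_d C Hp Hu Hv H) lt_le.
have H' : cyc_lt v xp u by rewrite cyc_lt_swap // H.
apply/orP; right; rewrite (G_side C Hxp Hv Hu) 1?eq_sym // H' /=.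
by rewrite (G_prec_d C Hp Hv Hu H') lt_le.
Qed.

Lemma pair_S2 x xp : pairOK x xp -> inS2 [set x; xp].
Proof. move=> Hp; exists x, xp; split=> //; [exact: ZE_S2 (pairOK_x Hp) | exact: ZE_S2 (pairOK_xp Hp)]. Qed.

Lemma fwd x xp q : pairOK x xp -> is_Tpath S2 D2 xp beta q -> is_Tpath [set: 'I_n] D alpha beta (Psi x q).
Proof.
move=> Hp; have Hxp := pairOK_xp Hp; have Hx := pairOK_x Hp; have Hxxp := pairOK_neq Hp; have Hdx := pairOK_d Hp.
case: q => [//|q0 t] /TPE [E0 [Hl [Hab [HS [Hz [Hu [Hnc [Hodd Hpw]]]]]]]]; subst q0.
case: t Hl HS Hz Hu Hnc Hodd Hpw => [|y t'] Hl HS Hz Hu Hnc Hodd Hpw.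
  by move: (ZE_beta Hxp); rewrite -Hl /= eqxx.
have HstS2 := steps_S2 HS.
have Hodd' : forall e, e \in odds (steps (xp :: y :: t')) -> [/\ e \in D2, crossd e [set xp; beta], inS2 e & xp \notin e].
  move=> e He; move/allP: Hodd => /(_ e He) /andP[h1 h2]; split => //; first exact: F_D2.
  exact: xp_notin_cross h2.
have Hodd_all : all (fun e => (e \in D) && crossd e [set alpha; beta]) (odds (steps (xp :: y :: t'))).
  apply/allP => e He; have [h1 h2 h3 _] := Hodd' e He.
  by rewrite F_D2D //= (T_cross_fwd Hxp h3 h2).
have Hpw' : pairwise (prec alpha) (odds (steps (xp :: y :: t'))).
  apply: (sub_in_pairwise (P := fun e => (e \in D2) && crossd e [set xp; beta])) Hpw.
    move=> e1 e2 _ /andP[h1 h2] H; rewrite (T_prec _ Hxp) //; [exact: F_D2 | exact: xp_notin_cross h2].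
  by apply/allP => e /Hodd' [-> ->].
have Hnc_q : all (fun dg => [forall e in D, ~~ crossd dg e]) (steps (xp :: y :: t')).
  apply/allP => g Hg; apply/forallP => e; apply/implyP => He.
  case: (F_D He) => [->|HeD2]; first exact: nocross_S2_d (HstS2 _ Hg).
  by move/allP: Hnc => /(_ g Hg) /forallP /(_ e); rewrite HeD2.
have Hnc_ax : [forall e in D, ~~ crossd [set alpha; x] e].
  by apply/forallP => e; apply/implyP; apply: nocross_alpha.
have Hab' : alpha != beta := G_ab C.
rewrite /Psi; case: (eqVneq y x) => [Eyx|Nyx].
-
  subst y.
  have HS' : all (fun v => v \in S2) (x :: t') by move: HS => /= /andP[_].
  apply: TPI => //.
  + by apply/allP => v _; rewrite in_setT.
  + by move: Hz => /= /andP[_ ->]; rewrite ZE_alpha.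
  + rewrite steps_cons2 cons_uniq; move: Hu; rewrite steps_cons2 cons_uniq => /andP[_ ->]; rewrite andbT.
    apply/negP => /(steps_S2 HS') /alpha_notin; by rewrite !inE eqxx.
  + rewrite steps_cons2 /= Hnc_ax /=.
    by move: Hnc_q; rewrite steps_cons2 /= => /andP[_].
-
  apply: TPI => //.
  + by apply/allP => v _; rewrite in_setT.
  + by rewrite /= ZE_alpha //= Hxxp /=.
  + rewrite [steps (alpha :: _)]steps_cons2 [steps (x :: _)]steps_cons2 2!cons_uniq Hu andbT.
    apply/andP; split.
      rewrite inE negb_or; apply/andP; split.
        apply/negP => /eqP E; move: (alpha_notin (pair_S2 Hp)); by rewrite -E !inE eqxx.
      apply/negP => /HstS2 /alpha_notin; by rewrite !inE eqxx.
    rewrite steps_cons2 inE negb_or; apply/andP; split.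
      apply/negP => /eqP /set2_eq [[h1 h2]|[h1 h2]].
        by move: Hxxp; rewrite h1 eqxx.
      by move: Nyx; rewrite h1 eqxx.
    apply/negP => /mem_steps [a [b [E Ha' Hb']]].
    have Hxpin : xp \in y :: t'.
      have : xp \in [set a; b] by rewrite -E !inE eqxx orbT.
      by rewrite !inE => /orP[] /eqP ->.
    have Hxpl : xp != last xp (y :: t') by rewrite Hl eq_sym ZE_beta.
    have [e He Hxe] := vert_odd Hxpin Hxpl.
    by have [_ _ _ Hne] := Hodd' e He; rewrite Hxe in Hne.
  + rewrite [steps (alpha :: _)]steps_cons2 [steps (x :: _)]steps_cons2 2!all_cons Hnc_ax Hnc_q andbT /=.
    apply/forallP => e; apply/implyP => He; rewrite Hdx.
    case: (F_D He) => [->|HeD2]; first exact: nocross_d_d.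
    by rewrite crossd_sym; apply: nocross_S2_d; apply: F_D2.
  + rewrite [steps (alpha :: _)]steps_cons2 [steps (x :: _)]steps_cons2 odds_cons2 all_cons Hodd_all andbT.
    by rewrite Hdx Hd /= crossdE (G_d_cross C).
  + rewrite [steps (alpha :: _)]steps_cons2 [steps (x :: _)]steps_cons2 odds_cons2 pairwise_cons Hpw' andbT.
    apply/allP => e /Hodd' [_ h2 h3 _]; exact: T_prec_d Hp h3 h2.
Qed.


Lemma inS2_mem e v : inS2 e -> v \in e -> cyc_le eta v zeta.
Proof. by case=> u [w [-> Hu Hw]]; rewrite !inE => /orP[] /eqP ->. Qed.

Lemma odds_steps3 (a b c : 'I_n) l : odds (steps (a :: b :: c :: l)) = [set b; c] :: odds (steps (c :: l)).
Proof. by rewrite steps_cons2 steps_cons2 odds_cons2. Qed.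

Lemma fanfree xp e3 L : (xp == zeta) || (xp == eta) ->
  all (fun e => (e \in D) && crossd e [set alpha; beta]) (e3 :: L) ->
  pairwise (prec alpha) (e3 :: L) -> xp \notin e3 -> forall e, e \in e3 :: L -> xp \notin e.
Proof.
move=> Hxp /allP Hall; rewrite pairwise_cons => /andP[/allP Hp _] H3 e.
rewrite inE => /orP[/eqP->//|He].
have /andP[h1 h2] := Hall e3 (mem_head _ _).
have /andP[h3 h4] : (e \in D) && crossd e [set alpha; beta] by apply: Hall; rewrite inE He orbT.
exact: T_fan Hxp (F_Dsub h1) (F_Dsub h3) h2 h4 H3 (Hp e He).
Qed.

Lemma pw_transfer xp L : (xp == zeta) || (xp == eta) ->
  (forall e, e \in L -> e \in D /\ xp \notin e) ->
  pairwise (prec alpha) L -> pairwise (prec xp) L.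
Proof.
move=> Hxp; elim: L => [//|e0 L IH] H; rewrite !pairwise_cons => /andP[/allP H1 H2].
rewrite IH ?andbT //; last by move=> e He; apply: H; rewrite inE He orbT.
apply/allP => e He; have [h1 h2] : e \in D /\ xp \notin e by apply: H; rewrite inE He orbT.
by rewrite -(T_prec _ Hxp (F_Dsub h1) h2) H1.
Qed.

Lemma rev_ pi : is_Tpath [set: 'I_n] D alpha beta pi ->
  exists x, exists xp, exists q, [/\ pairOK x xp, is_Tpath S2 D2 xp beta q & pi = Psi x q].
Proof.
case: pi => [//|a0 t] H; have [E0 [Hl [Hab [_ [Hz [Hu [Hnc [Hodd Hpw]]]]]]]] := TPE H; clear H; subst a0.
have HtS2 : forall v, v \in t -> cyc_le eta v zeta.
  move=> v Hv; case: (eqVneq v (last alpha t)) => [->|Hvl]; first by rewrite Hl; exact: G_beta_S2 C.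
  have [e He Hve] := vert_odd Hv Hvl.
  by move/allP: Hodd => /(_ e He) /andP[/F_Dsub h _]; exact: inS2_mem h Hve.
case: t Hl Hz Hu Hnc Hodd Hpw HtS2 => [|x t1] Hl Hz Hu Hnc Hodd Hpw HtS2.
  by move: Hab; rewrite -Hl /= eqxx.
case: t1 Hl Hz Hu Hnc Hodd Hpw HtS2 => [|y t2] Hl Hz Hu Hnc Hodd Hpw HtS2.
  move: Hnc; rewrite /= andbT => /forallP /(_ d); rewrite Hd /= crossdE crossv_symP.
  by move: Hl => /= ->; rewrite (G_d_cross C).
rewrite odds_steps3 in Hodd Hpw.
have Hax : ~~ crossd [set alpha; x] d.
  by move: Hnc; rewrite steps_cons2 all_cons => /andP[/forallP /(_ d) + _]; rewrite Hd.
have HxS2 : cyc_le eta x zeta by apply: HtS2; rewrite inE eqxx.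
have Hxze : (x == zeta) || (x == eta).
  apply: (G_P1S2 C HxS2); apply: (G_alpha_step C); by rewrite -crossdE.
have [xp Hp] : exists xp, pairOK x xp.
  by case/orP: Hxze => /eqP ->; [exists eta | exists zeta]; rewrite /pairOK !eqxx ?orbT.
have Hxp := pairOK_xp Hp; have Hxxp := pairOK_neq Hp; have Hdx := pairOK_d Hp.
have Hff := fanfree Hxp Hodd Hpw.
have Hodd_e : forall e, e \in [set x; y] :: odds (steps (y :: t2)) -> [/\ e \in D, crossd e [set alpha; beta] & inS2 e].
  by move=> e He; move/allP: Hodd => /(_ e He) /andP[h1 h2]; split => //; apply: F_Dsub.
have Hnc' : forall g, g \in steps [:: alpha, x, y & t2] -> [forall e in D2, ~~ crossd g e].
  move=> g Hg; move/allP: Hnc => /(_ g Hg) /forallP H'; apply/forallP => e; apply/implyP => He.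
  by move: (H' e); rewrite (F_D2D He).
case: (eqVneq y xp) => [Eyxp|Nyxp].
-
  subst y.
  have Hu' : uniq ([set alpha; x] :: [set x; xp] :: steps (xp :: t2)) by rewrite -!steps_cons2.
  have Ht2 : forall t3, t2 = x :: t3 -> False.
    move=> t3 E; move: Hu'; rewrite E steps_cons2 !cons_uniq !inE.
    by rewrite [[set xp; x]]setUC eqxx /= andbF.
  have Hxpe : forall e, e \in odds (steps (xp :: t2)) -> xp \notin e.
    case E2: t2 => [|w [|z t4]] //; rewrite E2 in Hz Hu' Hodd Hpw.
    rewrite odds_steps3 => e He.
    have Hw : w != xp by move: Hz => /= /and4P[_ _ ]; rewrite eq_sym.
    have Hzx : z != xp.
      apply/negP => /eqP Ez; move: Hu'; rewrite Ez steps_cons2 steps_cons2 !cons_uniq !inE.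
      by rewrite [[set w; xp]]setUC eqxx /= !andbF.
    have H3 : xp \notin [set w; z] by rewrite !inE negb_or ![xp == _]eq_sym Hw Hzx.
    move: Hodd Hpw; rewrite odds_steps3 => Hodd Hpw.
    move: Hodd => /allP Hall; have Hall' : all (fun e => (e \in D) && crossd e [set alpha; beta]) ([set w; z] :: odds (steps (z :: t4))).
      by apply/allP => e' He'; apply: Hall; rewrite inE He' orbT.
    move: Hpw; rewrite pairwise_cons => /andP[_ Hpw'].
    exact: (fanfree Hxp Hall' Hpw' H3 He).
  exists x, xp, (xp :: t2); split => //.
  + apply: TPI => //.
    * by rewrite eq_sym ZE_beta.
    * rewrite all_cons inE (ZE_S2 Hxp) /=; apply/allP => v Hv; rewrite inE; apply: HtS2; by rewrite !inE Hv !orbT.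
    * by move: Hz => /= /andP[_ /andP[_]].
    * by move: Hu'; rewrite 2!cons_uniq => /andP[_ /andP[_]].
    * apply/allP => g Hg; apply: Hnc'; by rewrite !steps_cons2 !inE Hg !orbT.
    * apply/allP => e He.
      have Hin : e \in [set x; xp] :: odds (steps (xp :: t2)) by rewrite inE He orbT.
      have [h1 h2 h3] := Hodd_e e Hin.
      have Hned : e != d.
        apply/negP => /eqP Ed; move: Hu'; rewrite 2!cons_uniq => /and3P[_ + _].
        by rewrite Hdx -Ed (mem_odds He).
      have HeD2 : e \in D2 by case: (F_D h1) => // Ed; rewrite Ed eqxx in Hned.
      by rewrite HeD2 /= (T_cross_back Hxp h3 (Hxpe e He) h2).
    * move: Hpw; rewrite pairwise_cons => /andP[_ Hpw0].
      apply: (pw_transfer Hxp _ Hpw0) => e He; split; last exact: Hxpe.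
      have Hin : e \in [set x; xp] :: odds (steps (xp :: t2)) by rewrite inE He orbT.
      by have [h1 _ _] := Hodd_e e Hin.
  + rewrite /Psi; case E2: t2 => [|q1 qt] //; case: (eqVneq q1 x) => [E|] //.
    by exfalso; apply: (Ht2 qt); rewrite E2 E.
-
  have Hu_t : uniq ([set x; y] :: steps (y :: t2)).
    by move: Hu; rewrite [steps (alpha :: _)]steps_cons2 [steps (x :: _)]steps_cons2 cons_uniq => /andP[_].
  have Hxyn : xp \notin [set x; y].
    by rewrite !inE negb_or; apply/andP; split; rewrite eq_sym.
  have Hff' := Hff Hxyn.
  have Hxp_notin : xp \notin y :: t2.
    apply/negP => Hin.
    have Hin' : xp \in x :: y :: t2 by rewrite inE Hin orbT.
    have Hl' : xp != last alpha (x :: y :: t2) by rewrite Hl eq_sym ZE_beta.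
    have [e He Hxe] := vert_odd Hin' Hl'.
    by rewrite odds_steps3 in He; move: (Hff' e He); rewrite Hxe.
  have Hq_uniq : uniq ([set xp; x] :: [set x; y] :: steps (y :: t2)).
    rewrite cons_uniq Hu_t andbT inE negb_or; apply/andP; split.
      apply/negP => /eqP/set2_eq [[h1 h2]|[h1 h2]].
        by move: Hxxp; rewrite h1 eqxx.
      by move: Nyxp; rewrite h1 eqxx.
    apply/negP => /mem_steps [a [b [E Ha' Hb']]].
    have : xp \in [set a; b] by rewrite -E !inE eqxx.
    by rewrite !inE => /orP[] /eqP Ex; [move: Ha' | move: Hb']; rewrite -Ex; apply/negP.
  exists x, xp, (xp :: x :: y :: t2); split => //; last by rewrite /Psi eqxx.
  apply: TPI.
  + by [].
  + exact: Hl.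
  + by rewrite eq_sym ZE_beta.
  + rewrite all_cons; apply/andP; split; first by rewrite inE ZE_S2.
    apply/allP => v Hv; rewrite inE; exact: HtS2.
  + rewrite /= eq_sym Hxxp /=; by move: Hz => /= /andP[_].
  + by rewrite !steps_cons2.
  + rewrite [steps (xp :: _)]steps_cons2 all_cons; apply/andP; split.
      apply/forallP => e; apply/implyP => He; rewrite setUC Hdx crossd_sym.
      exact: nocross_S2_d (F_D2 He).
    apply/allP => g Hg; apply: Hnc'; by rewrite [steps (alpha :: _)]steps_cons2 inE Hg orbT.
  + rewrite odds_steps3; apply/allP => e He.
    have [h1 h2 h3] := Hodd_e e He.
    have Hne : e != d.
      apply/negP => /eqP Ed; move: Hq_uniq; rewrite cons_uniq => /andP[+ _].
      rewrite setUC Hdx -Ed; move: He; rewrite !inE => /orP[->//|/mem_odds ->]; by rewrite orbT.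
    have HeD2 : e \in D2 by case: (F_D h1) => // Ed; rewrite Ed eqxx in Hne.
    by rewrite HeD2 /= (T_cross_back Hxp h3 (Hff' e He) h2).
  + rewrite odds_steps3; apply: (pw_transfer Hxp _ Hpw) => e He; split; last exact: Hff' e He.
    by have [] := Hodd_e e He.
Qed.



Lemma Psi_form x q : exists r, Psi x q = alpha :: x :: r.
Proof. rewrite /Psi; case: q => [|a [|b r]]; try by eexists. by case: (b == x); eexists. Qed.

Definition Phi (xp : 'I_n) (pi : seq 'I_n) : seq 'I_n :=
  match pi with
  | _ :: b :: r => match r with y :: r' => if y == xp then xp :: r' else xp :: b :: r | [::] => xp :: b :: r end
  | _ => pi end.

Lemma PhiK x xp q : pairOK x xp -> is_Tpath S2 D2 xp beta q -> Phi xp (Psi x q) = q.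
Proof.
move=> Hp; have Hxxp := pairOK_neq Hp.
case: q => [//|q0 t] /TPE [E0 [Hl [_ [_ [_ [Hu _]]]]]]; subst q0.
case: t Hl Hu => [|y t'] Hl Hu; first by rewrite /= eqxx.
rewrite /Psi; case: (eqVneq y x) => [Eyx|Nyx]; last by rewrite /= eqxx.
subst y; case: t' Hl Hu => [|z t''] Hl Hu //=.
case: (eqVneq z xp) => // Ez; subst z.
by move: Hu; rewrite !steps_cons2 !cons_uniq !inE setUC eqxx.
Qed.

Lemma memT (S' : {set 'I_n}) (D' : {set {set 'I_n}}) (a b : 'I_n) (s : seq 'I_n) : (s \in Tpaths S' D' a b) = is_Tpath S' D' a b s.
Proof.
rewrite mem_filter mem_seqs_upto; apply/andP/idP => [[]//|H]; split => //.
exact: size_Tpath H.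
Qed.

Lemma uniqT (S' : {set 'I_n}) (D' : {set {set 'I_n}}) (a b : 'I_n) : uniq (Tpaths S' D' a b).
Proof. by rewrite filter_uniq // uniq_seqs_upto. Qed.

Lemma pOK_ze : pairOK zeta eta. Proof. by rewrite /pairOK !eqxx. Qed.
Lemma pOK_ez : pairOK eta zeta. Proof. by rewrite /pairOK !eqxx orbT. Qed.

Lemma Hperm : perm_eq (Tpaths [set: 'I_n] D alpha beta)
  ([seq Psi zeta q | q <- Tpaths S2 D2 eta beta] ++ [seq Psi eta q | q <- Tpaths S2 D2 zeta beta]).
Proof.
apply: uniq_perm; first exact: uniqT.
  rewrite cat_uniq; apply/and3P; split.
  - rewrite map_inj_in_uniq ?uniqT // => q1 q2; rewrite !memT => H1 H2 E.
    by rewrite -(PhiK pOK_ze H1) -(PhiK pOK_ze H2) E.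
  - apply/hasPn => p /mapP [q _ ->]; apply/negP => /mapP [q' _ E].
    have [r1 E1] := Psi_form eta q; have [r2 E2] := Psi_form zeta q'.
    by move: E; rewrite E1 E2 => -[E3 _]; move: Hze; rewrite E3 eqxx.
  - rewrite map_inj_in_uniq ?uniqT // => q1 q2; rewrite !memT => H1 H2 E.
    by rewrite -(PhiK pOK_ez H1) -(PhiK pOK_ez H2) E.
move=> p; rewrite mem_cat memT; apply/idP/idP.
  move=> Hp; have [x [xp [q [Hpo Hq ->]]]] := rev_ Hp.
  case/orP: Hpo => /andP[/eqP Ex /eqP Exp]; subst x xp; apply/orP; [left|right];
    by apply/mapP; exists q => //; rewrite memT.
case/orP => /mapP [q Hq ->]; rewrite memT in Hq; [exact: fwd pOK_ze Hq | exact: fwd pOK_ez Hq].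
Qed.

Variable K : semifield.
Variable f : {set 'I_n} -> K.

Lemma weight x xp q : pairOK x xp -> is_Tpath S2 D2 xp beta q ->
  fval f (Psi x q) = sf_mul (sf_mul (f [set alpha; x]) (sf_inv (f d))) (fval f q).
Proof.
move=> Hp; have Hdx := pairOK_d Hp.
case: q => [//|q0 t] /TPE [E0 [Hl _]]; subst q0.
case: t Hl => [|y t'] Hl.
  by move: (ZE_beta (pairOK_xp Hp)); rewrite -Hl /= eqxx.
rewrite /Psi; case: (eqVneq y x) => [Eyx|Nyx].
  subst y; rewrite !fvalE !steps_cons2 /=.
  rewrite [[set xp; x]]setUC Hdx.
  set A := sf_prod _; set B := sf_inv _.
  rewrite -[sf_mul (sf_mul (f d) A) B]sf_mulA -!sf_mulA; congr (sf_mul _ _).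
  by rewrite sf_mulA sf_mulV sf_mul1.
rewrite !fvalE [steps (alpha :: _)]steps_cons2 [steps (x :: _)]steps_cons2 /=.
by rewrite Hdx sfinvM sfmulACA.
Qed.

Lemma main_eq : Tpath_formula S2 D2 f ->
  Some (sf_mul (sf_inv (f d))
          (sf_add (sf_mul (f [set alpha; zeta]) (f [set eta; beta]))
                  (sf_mul (f [set alpha; eta]) (f [set zeta; beta]))))
  = ssum [seq fval f p | p <- Tpaths [set: 'I_n] D alpha beta].
Proof.
move=> HT.
rewrite (ssum_perm _ Hperm) map_cat ssum_cat -!map_comp.
have E1 : [seq (fval f \o Psi zeta) q | q <- Tpaths S2 D2 eta beta] =
  [seq sf_mul (sf_mul (f [set alpha; zeta]) (sf_inv (f d))) y | y <- [seq fval f q | q <- Tpaths S2 D2 eta beta]].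
  rewrite -map_comp; apply/eq_in_map => q; rewrite memT => Hq /=; by rewrite (weight pOK_ze Hq).
have E2 : [seq (fval f \o Psi eta) q | q <- Tpaths S2 D2 zeta beta] =
  [seq sf_mul (sf_mul (f [set alpha; eta]) (sf_inv (f d))) y | y <- [seq fval f q | q <- Tpaths S2 D2 zeta beta]].
  rewrite -map_comp; apply/eq_in_map => q; rewrite memT => Hq /=; by rewrite (weight pOK_ez Hq).
rewrite E1 E2.
rewrite !ssum_map_mul.
have Hbe : eta != beta by rewrite eq_sym (G_be C).
have Hbz : zeta != beta by rewrite eq_sym (G_bz C).
have HbS : beta \in S2 by rewrite inE (G_beta_S2 C).
rewrite -(HT eta beta) ?inE ?G_eta_S2 ?(G_beta_S2 C) //.
rewrite -(HT zeta beta) ?inE ?G_zeta_S2 ?(G_beta_S2 C) //=.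
congr Some; rewrite sfmulDr.
by rewrite !sf_mulA [sf_mul (sf_inv (f d)) (f [set alpha; zeta])]sf_mulC [sf_mul (sf_inv (f d)) (f [set alpha; eta])]sf_mulC.

Qed.

End Main.


Theorem lemma3p9 (K : semifield) (n : nat) (Hn : 3 <= n)
  (D D2 : {set {set 'I_n}}) (zeta eta alpha beta : 'I_n)
  (f : {set 'I_n} -> K) :
  dissection [set: 'I_n] D ->
  [set zeta; eta] \in D ->
  D = [set zeta; eta] |: D2 ->
  dissection [set e | cyc_le eta e zeta] D2 ->
  cyc_lt zeta alpha eta ->
  cyc_lt eta beta zeta ->
  Tpath_formula [set e | cyc_le eta e zeta] D2 f ->
  Some (sf_mul (sf_inv (f [set zeta; eta]))
          (sf_add (sf_mul (f [set alpha; zeta]) (f [set eta; beta]))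
                  (sf_mul (f [set alpha; eta]) (f [set zeta; beta]))))
  = ssum [seq fval f p | p <- Tpaths [set: 'I_n] D alpha beta].
Proof.
move=> HD Hd HDe HD2 Ha Hb HT.
exact: (main_eq HD Hd HDe HD2 Ha Hb HT).
Qed.
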